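(* Let $A\in\mathbb{R}^{m\times N}$, $\eta\ge 0$, let $x\in\mathbb{R}^N$ be nonzero and $k$-sparse, and let $y=Ax+\varepsilon$ with $\lVert\varepsilon\rVert_2\le\eta$. Let $1<q\le\infty$ and suppose $\rho_{q,3^{q/(q-1)}k}(A)>0$. Then any solution $\hat x$ of $$\min_{z\in\mathbb{R}^N\setminus\{0\}}\frac{\lVert z\rVert_1}{\lVert z\rVert_q}\quad\text{subject to}\quad \lVert y-Az\rVert_2\le\eta$$ obeys $$\lVert\hat x-x\rVert_q\le\frac{2\eta}{\rho_{q,3^{q/(q-1)}k}(A)},\qquad \lVert\hat x-x\rVert_1\le\frac{6k^{1-1/q}\eta}{\rho_{q,3^{q/(q-1)}k}(A)}.$$
   Context: For nonzero $z\in\mathbb{R}^N$ and $q\in(1,\infty)$, $s_q(z)=\left(\lVert z\rVert_1/\lVert z\rVert_q\right)^{q/(q-1)}$, and $s_\infty(z)=\lVert z\rVert_1/\lVert z\rVert_\infty$. For real $s\ge1$ and $q\in(1,\infty]$, the $q$-ratio constrained minimal singular value of $A$ is $\rho_{q,s}(A)=\min\{\lVert Az\rVert_2/\lVert z\rVert_q: z\ne0,\ s_q(z)\le s\}$. For $q=\infty$ interpret $q/(q-1)=1$ and $1-1/q=1$. A vector is $k$-sparse if it has at most $k$ nonzero entries. *)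

(* Defs.v *)
From HB Require Import structures.
From mathcomp Require Import all_boot all_order all_algebra.
From mathcomp Require Import all_classical all_reals all_analysis.
Set Implicit Arguments. Unset Strict Implicit. Unset Printing Implicit Defensive.
Import Order.TTheory GRing.Theory Num.Theory.
Local Open Scope ring_scope.

Section Defs.
Variable R : realType.

(* The exponent q is an extended real; the theorem assumes 1 < q (so q is a
   finite real r > 1 or +oo). *)

Definition l1norm (N : nat) (z : 'cV[R]_N) : R := \sum_i `|z i 0|.

Definition l2norm (N : nat) (z : 'cV[R]_N) : R := Num.sqrt (\sum_i (z i 0) ^+ 2).

Definition lqnorm (q : \bar R) (N : nat) (z : 'cV[R]_N) : R :=
  match q with
  | r%:E => (\sum_i `|z i 0| `^ r) `^ (r^-1)
  | _ => \big[Num.max/0]_i `|z i 0|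
  end.

Definition qexp (q : \bar R) : R :=
  match q with r%:E => r / (r - 1) | _ => 1 end.

Definition qdual (q : \bar R) : R :=
  match q with r%:E => 1 - r^-1 | _ => 1 end.

Definition sparsity_q (q : \bar R) (N : nat) (z : 'cV[R]_N) : R :=
  match q with
  | r%:E => (l1norm z / lqnorm q z) `^ (r / (r - 1))
  | _ => l1norm z / lqnorm q z
  end.

(* q-ratio constrained minimal singular value rho_{q,s}(A)
   (the minimum, expressed as the infimum of the attained values) *)
Definition rho_qs (q : \bar R) (s : R) (m N : nat) (A : 'M[R]_(m, N)) : R :=
  inf [set l2norm (A *m z) / lqnorm q z |
        z in [set z : 'cV[R]_N | z != 0 /\ sparsity_q q z <= s]].

Definition ksparse (k N : nat) (z : 'cV[R]_N) : Prop :=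
  (#|[set i | z i ord0 != 0%R]| <= k)%N.

Definition is_l1lq_solution (q : \bar R) (m N : nat) (A : 'M[R]_(m, N))
    (y : 'cV[R]_m) (eta : R) (xh : 'cV[R]_N) : Prop :=
  [/\ xh != 0, l2norm (y - A *m xh) <= eta &
      forall z : 'cV[R]_N, z != 0 -> l2norm (y - A *m z) <= eta ->
        l1norm xh / lqnorm q xh <= l1norm z / lqnorm q z].

End Defs.

(* Main.v *)
Require Import Defs.
From HB Require Import structures.
From mathcomp Require Import all_boot all_order all_algebra.
From mathcomp Require Import all_classical all_reals all_analysis.
From mathcomp Require Import ring lra.
Import Order.TTheory GRing.Theory Num.Theory.
Local Open Scope ring_scope.

Section S.
Variable R : realType.

Lemma conv_pow (r l s t : R) : 1 <= r -> 0 <= l -> l <= 1 -> 0 <= s -> 0 <= t ->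
  (l * s + (1 - l) * t) `^ r <= l * s `^ r + (1 - l) * t `^ r.
Proof.
move=> r1 l0 l1 s0 t0.
have := @convex_powR R r r1 (Itv01 l0 l1) s t.
rewrite !convRE /=.
apply.
- by rewrite inE /= in_itv /= s0.
- by rewrite inE /= in_itv /= t0.
Qed.

Lemma powRV (x r : R) : 0 < x -> (x^-1) `^ r = (x `^ r)^-1.
Proof.
move=> x0; by rewrite -powR_inv1 ?ltW // -powRrM mulN1r powRN.
Qed.

Lemma Fadd (r a b X H : R) : 1 <= r -> 0 <= a -> 0 <= b -> 0 < X -> 0 < H ->
  (a + b) `^ r / (X + H) `^ (r - 1) <= a `^ r / X `^ (r - 1) + b `^ r / H `^ (r - 1).
Proof.
move=> r1 a0 b0 X0 H0.
have r0 : 0 < r by lra.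
have T0 : 0 < X + H by lra.
have l0 : 0 <= X / (X + H) by rewrite divr_ge0 // ltW.
have l1 : X / (X + H) <= 1 by rewrite ler_pdivrMr // mul1r lerDl ltW.
have := @conv_pow r _ _ _ r1 l0 l1 (divr_ge0 a0 (ltW X0)) (divr_ge0 b0 (ltW H0)).
have -> : X / (X + H) * (a / X) + (1 - X / (X + H)) * (b / H) = (a + b) * (X + H)^-1.
  by field; rewrite ?gt_eqF.
have -> : 1 - X / (X + H) = H / (X + H) by field; rewrite gt_eqF.
move=> h.
rewrite powRM ?invr_ge0 ?addr_ge0 ?(ltW T0) // in h.
rewrite powRM ?invr_ge0 ?(ltW X0) // in h.
rewrite powRM ?invr_ge0 ?(ltW H0) // in h.
rewrite !powRV // in h.
rewrite -(mulr_powRB1 (ltW X0) r0) -(mulr_powRB1 (ltW H0) r0) -(mulr_powRB1 (ltW T0) r0) in h.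
have PX := powR_gt0 (r - 1) X0.
have PH := powR_gt0 (r - 1) H0.
have PT := powR_gt0 (r - 1) T0.
set pa := a `^ r; set pb := b `^ r; set pab := (a + b) `^ r.
set qx := X `^ (r - 1); set qh := H `^ (r - 1); set qt := (X + H) `^ (r - 1).
have e1 : pab / qt = (X + H) * (pab * ((X + H) * qt)^-1).
  by field; rewrite !gt_eqF.
have e2 : pa / qx + pb / qh = (X + H) * (X / (X + H) * (pa * (X * qx)^-1) + H / (X + H) * (pb * (H * qh)^-1)).
  by field; rewrite !gt_eqF.
rewrite e1 e2 ler_pM2l //.
all: exact: ltW.
Qed.

Lemma holder_seq (r : R) (I : Type) (s : seq I) (f : I -> R) : 1 <= r ->
  (forall i, 0 <= f i) ->
  (\sum_(i <- s) f i) `^ r / (size s)%:R `^ (r - 1) <= \sum_(i <- s) f i `^ r.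
Proof.
move=> r1 f0; have r0 : 0 < r by lra.
elim: s => [|i s IH].
  by rewrite !big_nil powR0 ?mul0r // gt_eqF.
rewrite !big_cons.
case: s IH => [|j s'] IH.
  by rewrite !big_nil !addr0 /= powR1 divr1.
have n0 : (0 < (size s').+1%:R :> R) by rewrite ltr0n.
have S0 : 0 <= \sum_(i0 <- j :: s') f i0 by apply: sumr_ge0.
rewrite [size _]/= -nat1r.
apply: le_trans (@Fadd r _ _ _ _ r1 (f0 i) S0 ltr01 n0) _.
rewrite powR1 divr1 lerD2l.
exact: IH.
Qed.

Lemma holder_set (r : R) (N : nat) (S : {set 'I_N}) (f : 'I_N -> R) : 1 <= r ->
  (forall i, 0 <= f i) ->
  \sum_(i in S) f i <= (#|S|%:R) `^ (1 - r^-1) * (\sum_(i in S) f i `^ r) `^ r^-1.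
Proof.
move=> r1 f0; have r0 : 0 < r by lra.
have := @holder_seq r _ (enum S) _ r1 f0.
rewrite !big_enum -cardE.
have [/cards0_eq ->|Sn0] := eqVneq #|S| 0%N.
  by move=> _; rewrite big_set0 mulr_ge0 ?powR_ge0.
have n0 : (0 < #|S|%:R :> R) by rewrite ltr0n lt0n.
have P0 := powR_gt0 (r - 1) n0.
have S0 : 0 <= \sum_(i in S) f i by apply: sumr_ge0.
have T0 : 0 <= \sum_(i in S) f i `^ r by apply: sumr_ge0 => i _; apply: powR_ge0.
rewrite ler_pdivrMr // mulrC => h.
have ri0 : 0 <= r^-1 by rewrite invr_ge0 ltW.
have := @ge0_ler_powR R r^-1 ri0 _ _ _ _ h.
rewrite -powRrM mulfV ?gt_eqF // powRr1 //.
rewrite powRM ?(ltW P0) // -powRrM.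
have -> : (r - 1) * r^-1 = 1 - r^-1 by field; rewrite gt_eqF.
apply.
- by rewrite nnegrE powR_ge0.
- by rewrite nnegrE mulr_ge0 ?powR_ge0.
Qed.

Lemma pn_ge0 (r : R) N (z : 'cV[R]_N) : 0 <= lqnorm r%:E z.
Proof. exact: powR_ge0. Qed.

Lemma pn_pow (r : R) N (z : 'cV[R]_N) : 0 < r ->
  (lqnorm r%:E z) `^ r = \sum_i `|z i 0| `^ r.
Proof.
move=> r0; rewrite /lqnorm -powRrM mulVf ?gt_eqF // powRr1 //.
by apply: sumr_ge0 => i _; apply: powR_ge0.
Qed.

Lemma pn_zero (r : R) N (z : 'cV[R]_N) : 0 < r ->
  lqnorm r%:E z = 0 -> forall i, z i 0 = 0.
Proof.
move=> r0 /powR_eq0_eq0 h i.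
have := @psumr_eq0P _ _ xpredT (fun i => `|z i 0| `^ r) (fun i _ => powR_ge0 _ _) h i isT.
by move/powR_eq0_eq0/normr0_eq0.
Qed.

Lemma mink_key (r : R) N (u v : 'cV[R]_N) (X H : R) : 1 <= r -> 0 < X -> 0 < H ->
  \sum_i `|u i 0| `^ r = X `^ r -> \sum_i `|v i 0| `^ r = H `^ r ->
  \sum_i `|(u + v) i 0| `^ r <= (X + H) `^ r.
Proof.
move=> r1 Xp Hp eu ev; have r0 : 0 < r by lra.
have XHp : 0 < X + H := addr_gt0 Xp Hp.
apply: le_trans (_ : _ <= \sum_i (X + H) `^ (r - 1) *
   (`|u i 0| `^ r / X `^ (r - 1) + `|v i 0| `^ r / H `^ (r - 1))) _.
  apply: ler_sum => i _.
  have := @Fadd r _ _ _ _ r1 (normr_ge0 (u i 0)) (normr_ge0 (v i 0)) Xp Hp.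
  rewrite ler_pdivrMr ?powR_gt0 // mulrC; apply: le_trans.
  rewrite mxE.
  have := @ge0_ler_powR R r (ltW r0) _ _ _ _ (ler_normD (u i 0) (v i 0)).
  apply.
  - by rewrite nnegrE.
  - by rewrite nnegrE addr_ge0.
rewrite -(mulr_sumr _ _ _ ((X + H) `^ (r - 1))).
rewrite big_split /=.
rewrite -(mulr_suml _ _ (fun i => `|u i 0| `^ r) (X `^ (r - 1))^-1).
rewrite -(mulr_suml _ _ (fun i => `|v i 0| `^ r) (H `^ (r - 1))^-1).
rewrite eu ev.
rewrite -{1}(mulr_powRB1 (ltW Xp) r0) -{1}(mulr_powRB1 (ltW Hp) r0).
rewrite !mulfK ?gt_eqF ?powR_gt0 //.
by rewrite mulrC mulr_powRB1 // ltW.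
Qed.

Lemma mink (r : R) N (u v : 'cV[R]_N) : 1 <= r ->
  lqnorm r%:E (u + v) <= lqnorm r%:E u + lqnorm r%:E v.
Proof.
move=> r1; have r0 : 0 < r by lra.
have ri0 : 0 <= r^-1 by rewrite invr_ge0 ltW.
have [X0|Xn] := eqVneq (lqnorm r%:E u) 0.
  suff -> : lqnorm r%:E (u + v) = lqnorm r%:E v by rewrite X0 add0r.
  rewrite /lqnorm; congr (_ `^ _).
  by apply: eq_bigr => i _; rewrite mxE (@pn_zero r _ _ r0 X0) add0r.
have [H0|Hn] := eqVneq (lqnorm r%:E v) 0.
  suff -> : lqnorm r%:E (u + v) = lqnorm r%:E u by rewrite H0 addr0.
  rewrite /lqnorm; congr (_ `^ _).
  by apply: eq_bigr => i _; rewrite mxE (@pn_zero r _ _ r0 H0) addr0.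
have Xp : 0 < lqnorm r%:E u by rewrite lt0r Xn pn_ge0.
have Hp : 0 < lqnorm r%:E v by rewrite lt0r Hn pn_ge0.
have XHp := addr_gt0 Xp Hp.
have key := @mink_key r _ u v _ _ r1 Xp Hp (esym (@pn_pow r _ u r0)) (esym (@pn_pow r _ v r0)).
have := @ge0_ler_powR R r^-1 ri0 _ _ _ _ key.
rewrite -powRrM mulfV ?gt_eqF // powRr1 ?(ltW XHp) //.
apply.
- by rewrite nnegrE sumr_ge0 // => i _; apply: powR_ge0.
- by rewrite nnegrE powR_ge0.
Qed.

Lemma supp_zero N (x : 'cV[R]_N) i : i \notin [set j | x j ord0 != 0] -> x i 0 = 0.
Proof. by rewrite inE negbK => /eqP. Qed.

Lemma cone N k (x xh : 'cV[R]_N) (nq : 'cV[R]_N -> R) (s : R) :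
  (forall z, 0 <= nq z) ->
  (forall z, z != 0 -> 0 < nq z) ->
  (forall u v, nq (u + v) <= nq u + nq v) ->
  (forall (z : 'cV[R]_N) (S : {set 'I_N}), (#|S| <= k)%N -> \sum_(i in S) `|z i 0| <= s * nq z) ->
  x != 0 -> xh != 0 -> ksparse k x ->
  l1norm xh / nq xh <= l1norm x / nq x ->
  l1norm (xh - x) <= 3 * s * nq (xh - x).
Proof.
move=> nq0 nqp nqt nqh x0 xh0 ks hsol.
set S := [set j | x j ord0 != 0].
have HS : (#|S| <= k)%N by [].
have nx := nqp _ x0; have nxh := nqp _ xh0.
have l1x : l1norm x = \sum_(i in S) `|x i 0|.
  rewrite /l1norm (bigID (fun i => i \in S)) /= [X in _ + X]big1 ?addr0 //.
  by move=> i /supp_zero ->; rewrite normr0.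
have alpha : l1norm x / nq x <= s by rewrite ler_pdivrMr // l1x nqh.
have s0 : 0 <= s by apply: le_trans alpha; rewrite divr_ge0 // ?sumr_ge0 // ltW.
have [h exh] : exists h, xh = x + h by exists (xh - x); rewrite addrC subrK.
rewrite (_ : xh - x = h); last by rewrite exh addrC addKr.
have step1 : l1norm xh <= l1norm x + s * nq h.
  have a0 : 0 <= l1norm x / nq x by rewrite divr_ge0 // ?sumr_ge0 // ltW.
  rewrite ler_pdivrMr // in hsol.
  apply: (le_trans hsol).
  apply: le_trans (_ : _ <= l1norm x / nq x * (nq x + nq h)) _.
    apply: ler_wpM2l => //; rewrite {1}exh; exact: nqt.
  rewrite mulrDr divfK ?gt_eqF // lerD2l.
  by apply: ler_wpM2r.
have step2 : \sum_(i in S) `|x i 0| - \sum_(i in S) `|h i 0| + \sum_(i | i \notin S) `|h i 0| <= l1norm xh.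
  rewrite exh /l1norm [X in _ <= X](bigID (fun i => i \in S)) /=.
  apply: lerD.
    rewrite -sumrB; apply: ler_sum => i _; rewrite mxE; exact: lerB_normD.
  by apply: ler_sum => i /supp_zero; rewrite mxE => ->; rewrite add0r.
have hS := nqh h S HS.
have -> : l1norm h = \sum_(i in S) `|h i 0| + \sum_(i | i \notin S) `|h i 0|.
  by rewrite /l1norm (bigID (fun i => i \in S)).
rewrite -l1x in step2.
have := le_trans step2 step1.
lra.
Qed.

Lemma l2_lq m (z : 'cV[R]_m) : l2norm z = lqnorm 2%:E z.
Proof.
rewrite /l2norm /lqnorm powR12_sqrt; last by apply: sumr_ge0 => i _; apply: powR_ge0.
congr Num.sqrt; apply: eq_bigr => i _.
by rewrite powR_mulrn ?normr_ge0 // real_normK ?num_real.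
Qed.

Lemma l2_tri m (u v : 'cV[R]_m) : l2norm (u + v) <= l2norm u + l2norm v.
Proof. rewrite !l2_lq; apply: mink; lra. Qed.

Lemma l2N m (u : 'cV[R]_m) : l2norm (- u) = l2norm u.
Proof. by rewrite /l2norm; congr Num.sqrt; apply: eq_bigr => i _; rewrite mxE sqrrN. Qed.

Lemma l2_ge0 m (u : 'cV[R]_m) : 0 <= l2norm u.
Proof. exact: sqrtr_ge0. Qed.

Lemma Ah_bound m N (A : 'M[R]_(m, N)) eta x eps y xh :
  y = A *m x + eps -> l2norm eps <= eta -> l2norm (y - A *m xh) <= eta ->
  l2norm (A *m (xh - x)) <= 2 * eta.
Proof.
move=> Hy He Hxh.
have -> : A *m (xh - x) = (y - A *m x) - (y - A *m xh).
  by rewrite mulmxBr opprB [RHS]addrC [RHS]addrA subrK.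
have -> : y - A *m x = eps by rewrite Hy addrC addKr.
apply: le_trans (@l2_tri _ eps (- (y - A *m xh))) _; rewrite l2N; lra.
Qed.

Lemma final_gen (q : \bar R) m N k (A : 'M[R]_(m, N)) eta x eps y xh (s : R) :
  (forall z : 'cV[R]_N, 0 <= lqnorm q z) ->
  (forall z : 'cV[R]_N, z != 0 -> 0 < lqnorm q z) ->
  (forall u v : 'cV[R]_N, lqnorm q (u + v) <= lqnorm q u + lqnorm q v) ->
  (forall (z : 'cV[R]_N) (S : {set 'I_N}), (#|S| <= k)%N ->
      \sum_(i in S) `|z i 0| <= s * lqnorm q z) ->
  lqnorm q (0 : 'cV[R]_N) = 0 -> 0 <= s ->
  (forall z : 'cV[R]_N, z != 0 -> l1norm z <= 3 * s * lqnorm q z ->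
      sparsity_q q z <= 3 `^ qexp q * k%:R) ->
  0 <= eta -> x != 0 -> ksparse k x -> y = A *m x + eps -> l2norm eps <= eta ->
  0 < rho_qs q (3 `^ qexp q * k%:R) A ->
  is_l1lq_solution q A y eta xh ->
  lqnorm q (xh - x) <= 2 * eta / rho_qs q (3 `^ qexp q * k%:R) A /\
  l1norm (xh - x) <= 6 * s * eta / rho_qs q (3 `^ qexp q * k%:R) A.
Proof.
move=> nq0 nqp nqt nqh nqz s0 sp eta0 x0 ks Hy He rho0 [xh0 Hxh Hopt].
have feas : l2norm (y - A *m x) <= eta by rewrite Hy addrC addKr.
have cone' := @cone _ k x xh _ s nq0 nqp nqt nqh x0 xh0 ks (Hopt x x0 feas).
have Ah := @Ah_bound _ _ A eta x eps y xh Hy He Hxh.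
move: rho0; set rho := rho_qs _ _ _ => rho0.
have [h0|hn] := eqVneq (xh - x) 0.
  rewrite h0 nqz /l1norm big1 => [|i _]; last by rewrite mxE normr0.
  split; apply: divr_ge0; rewrite ?mulr_ge0 //; exact: ltW.
have nh := nqp _ hn.
have hq : rho <= l2norm (A *m (xh - x)) / lqnorm q (xh - x).
  rewrite /rho /rho_qs; apply: ge_inf.
    by exists 0 => _ [z _ <-]; apply: divr_ge0; [exact: l2_ge0 | exact: nq0].
  exists (xh - x) => //; split => //; apply: sp => //.
rewrite ler_pdivlMr // in hq.
have nqb : lqnorm q (xh - x) <= 2 * eta / rho.
  by rewrite ler_pdivlMr // mulrC; apply: le_trans hq Ah.
split => //.
apply: le_trans cone' _.
rewrite (_ : 6 * s * eta / rho = 3 * s * (2 * eta / rho)); last first.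
  by field; rewrite gt_eqF.
by apply: ler_wpM2l => //; rewrite mulr_ge0.
Qed.

Lemma nz_entry N (z : 'cV[R]_N) : z != 0 -> exists i, z i 0 != 0.
Proof.
move=> Hz; have [i Hi|H] := pickP (fun i => z i 0 != 0); first by exists i.
case/eqP: Hz; apply/matrixP => i j; rewrite ord1 mxE; apply/eqP.
exact: negbFE (H i).
Qed.

Lemma inf_ge0 N (z : 'cV[R]_N) : 0 <= lqnorm +oo%E z.
Proof.
rewrite /lqnorm; apply: (big_ind (fun v => 0 <= v)) => //.
by move=> a b a0 b0; rewrite le_max a0.
Qed.

Lemma inf_ge N (z : 'cV[R]_N) i : `|z i 0| <= lqnorm +oo%E z.
Proof. exact: le_bigmax. Qed.

Lemma inf_pos N (z : 'cV[R]_N) : z != 0 -> 0 < lqnorm +oo%E z.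
Proof.
move/nz_entry => [i Hi]; apply: lt_le_trans (@inf_ge _ z i).
by rewrite normr_gt0.
Qed.

Lemma inf_tri N (u v : 'cV[R]_N) : lqnorm +oo%E (u + v) <= lqnorm +oo%E u + lqnorm +oo%E v.
Proof.
rewrite {1}/lqnorm; apply: bigmax_le => [|i _]; first by rewrite addr_ge0 ?inf_ge0.
rewrite mxE; apply: le_trans (ler_normD _ _) _; apply: lerD; exact: inf_ge.
Qed.

Lemma inf_hold N k (z : 'cV[R]_N) (S : {set 'I_N}) : (#|S| <= k)%N ->
  \sum_(i in S) `|z i 0| <= k%:R `^ qdual +oo%E * lqnorm +oo%E z.
Proof.
move=> HS; rewrite [qdual _]/= powRr1 ?ler0n //.
apply: le_trans (_ : _ <= \sum_(i in S) lqnorm +oo%E z) _.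
  by apply: ler_sum => i _; exact: inf_ge.
rewrite sumr_const -(mulr_natl (lqnorm +oo%E z) #|S|); apply: ler_wpM2r; first exact: inf_ge0.
by rewrite ler_nat.
Qed.

Lemma inf_zero N : lqnorm +oo%E (0 : 'cV[R]_N) = 0.
Proof.
apply/le_anti; rewrite inf_ge0 andbT.
by rewrite {1}/lqnorm; apply: bigmax_le => // i _; rewrite mxE normr0.
Qed.

Lemma fin_pos (r : R) N (z : 'cV[R]_N) : 0 < r -> z != 0 -> 0 < lqnorm r%:E z.
Proof.
move=> r0 Hz; rewrite lt0r pn_ge0 andbT; apply/eqP => H.
by case/nz_entry: Hz => i; rewrite (@pn_zero r _ _ r0 H i) eqxx.
Qed.

Lemma fin_hold (r : R) N k (z : 'cV[R]_N) (S : {set 'I_N}) : 1 <= r -> (#|S| <= k)%N ->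
  \sum_(i in S) `|z i 0| <= k%:R `^ qdual r%:E * lqnorm r%:E z.
Proof.
move=> r1 HS; have r0 : 0 < r by lra.
have e0 : 0 <= 1 - r^-1 by rewrite subr_ge0 invf_le1.
have ri0 : 0 <= r^-1 by rewrite invr_ge0 ltW.
rewrite [qdual _]/=.
apply: le_trans (@holder_set r N S (fun i => `|z i 0|) r1 (fun i => normr_ge0 _)) _.
apply: ler_pM; rewrite ?powR_ge0 //.
  have h : (#|S|%:R <= k%:R :> R) by rewrite ler_nat.
  have := @ge0_ler_powR R _ e0 _ _ _ _ h; apply; by rewrite nnegrE ler0n.
have h : \sum_(i in S) `|z i 0| `^ r <= \sum_i `|z i 0| `^ r.
  rewrite [X in _ <= X](bigID (fun i => i \in S)) /= lerDl.
  by apply: sumr_ge0 => i _; apply: powR_ge0.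
have := @ge0_ler_powR R _ ri0 _ _ _ _ h; apply; rewrite nnegrE.
  by apply: sumr_ge0 => i _; apply: powR_ge0.
by apply: sumr_ge0 => i _; apply: powR_ge0.
Qed.

Lemma fin_zero (r : R) N : 0 < r -> lqnorm r%:E (0 : 'cV[R]_N) = 0.
Proof.
move=> r0; rewrite /lqnorm big1 ?powR0 // => [|i _].
  by rewrite invr_neq0 // gt_eqF.
by rewrite mxE normr0 powR0 // gt_eqF.
Qed.

Lemma fin_sp (r : R) N k (z : 'cV[R]_N) : 1 < r -> z != 0 ->
  l1norm z <= 3 * k%:R `^ qdual r%:E * lqnorm r%:E z ->
  sparsity_q r%:E z <= 3 `^ qexp r%:E * k%:R.
Proof.
move=> r1 Hz; have r0 : 0 < r by lra.
have nz := @fin_pos r _ z r0 Hz.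
rewrite /sparsity_q [qdual _]/= [qexp _]/= -ler_pdivrMr // => h.
have e0 : 0 <= r / (r - 1) by rewrite divr_ge0 // ?subr_ge0 ltW.
have := @ge0_ler_powR R _ e0 _ _ _ _ h.
move=> H; apply: le_trans (H _ _) _.
- by rewrite nnegrE; apply: divr_ge0; [apply: sumr_ge0 => i _; exact: normr_ge0 | exact: ltW].
- by rewrite nnegrE mulr_ge0 // powR_ge0.
rewrite powRM ?powR_ge0 // -powRrM.
have -> : (1 - r^-1) * (r / (r - 1)) = 1.
  by field; rewrite subr_eq0 !gt_eqF.
by rewrite powRr1 // ler0n.
Qed.
End S.

Theorem theorem1 (R : realType) (m N k : nat) (A : 'M[R]_(m, N)) (eta : R)
  (x : 'cV[R]_N) (eps : 'cV[R]_m) (y : 'cV[R]_m) (q : \bar R)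
  (xh : 'cV[R]_N) :
  0 <= eta ->
  x != 0 -> ksparse k x ->
  y = A *m x + eps -> l2norm eps <= eta ->
  (1%:E < q)%E ->
  0 < rho_qs q (3 `^ qexp q * k%:R) A ->
  is_l1lq_solution q A y eta xh ->
  lqnorm q (xh - x) <= 2 * eta / rho_qs q (3 `^ qexp q * k%:R) A /\
  l1norm (xh - x) <= 6 * k%:R `^ qdual q * eta / rho_qs q (3 `^ qexp q * k%:R) A.
Proof.
move=> eta0 x0 ks Hy He q1 rho0 sol.
case: q q1 rho0 sol => [r| |] q1 rho0 sol.
- have r1 : 1 < r by rewrite lte_fin in q1.
  have r1' : 1 <= r by apply: ltW.
  have r0 : 0 < r by lra.
  have H1 : forall z : 'cV[R]_N, 0 <= lqnorm r%:E z by move=> z; apply: pn_ge0.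
  have H2 : forall z : 'cV[R]_N, z != 0 -> 0 < lqnorm r%:E z by move=> z; apply: fin_pos.
  have H3 : forall u v : 'cV[R]_N, lqnorm r%:E (u + v) <= lqnorm r%:E u + lqnorm r%:E v.
    by move=> u v; apply: mink.
  have H4 : forall (z : 'cV[R]_N) (S : {set 'I_N}), (#|S| <= k)%N ->
      \sum_(i in S) `|z i 0| <= k%:R `^ qdual r%:E * lqnorm r%:E z.
    by move=> z S HS; apply: fin_hold.
  have H5 := @fin_zero R r N r0.
  have H6 : 0 <= k%:R `^ qdual r%:E by apply: powR_ge0.
  have H7 : forall z : 'cV[R]_N, z != 0 -> l1norm z <= 3 * k%:R `^ qdual r%:E * lqnorm r%:E z ->
      sparsity_q r%:E z <= 3 `^ qexp r%:E * k%:R by move=> z; apply: fin_sp.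
  exact: (@final_gen R r%:E m N k A eta x eps y xh _ H1 H2 H3 H4 H5 H6 H7 eta0 x0 ks Hy He rho0 sol).
- have H1 : forall z : 'cV[R]_N, 0 <= lqnorm +oo%E z by move=> z; apply: inf_ge0.
  have H2 : forall z : 'cV[R]_N, z != 0 -> 0 < lqnorm +oo%E z by move=> z; apply: inf_pos.
  have H3 : forall u v : 'cV[R]_N, lqnorm +oo%E (u + v) <= lqnorm +oo%E u + lqnorm +oo%E v.
    by move=> u v; apply: inf_tri.
  have H4 : forall (z : 'cV[R]_N) (S : {set 'I_N}), (#|S| <= k)%N ->
      \sum_(i in S) `|z i 0| <= k%:R `^ qdual +oo%E * lqnorm +oo%E z.
    by move=> z S HS; apply: inf_hold.
  have H5 := @inf_zero R N.
  have H6 : 0 <= k%:R `^ qdual (+oo%E : \bar R) by apply: powR_ge0.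
  have H7 : forall z : 'cV[R]_N, z != 0 -> l1norm z <= 3 * k%:R `^ qdual +oo%E * lqnorm +oo%E z ->
      sparsity_q +oo%E z <= 3 `^ qexp (+oo%E : \bar R) * k%:R.
    move=> z Hz; rewrite /sparsity_q [qdual _]/= [qexp _]/= powRr1 ?powRr1 ?ler0n //.
    by rewrite -ler_pdivrMr ?inf_pos.
  exact: (@final_gen R +oo%E m N k A eta x eps y xh _ H1 H2 H3 H4 H5 H6 H7 eta0 x0 ks Hy He rho0 sol).
- by rewrite ltNge leNye in q1.
Qed.
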